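(* The alternating oriented matroid $C^{6,4}$ is not pure.
   Context: The alternating oriented matroid $C^{n,d}$ on $[n]$ has as circuits exactly the signed sets $(I^{odd},I^{even})$ and $(I^{even},I^{odd})$, where $I=\{i_1<\dots<i_{d+1}\}$ ranges over $(d+1)$-subsets of $[n]$, $I^{odd}=\{i_1,i_3,\dots\}$, $I^{even}=\{i_2,i_4,\dots\}$. Two subsets $I,J\subseteq[n]$ are separated if no circuit $X$ satisfies $X^+\subseteq I\setminus J$, $X^-\subseteq J\setminus I$; an oriented matroid is pure if every pairwise-separated collection of subsets that is maximal by inclusion has the maximum possible cardinality among pairwise-separated collections. *)

(* Defs.v *)
From mathcomp Require Import all_boot.
Set Implicit Arguments. Unset Strict Implicit. Unset Printing Implicit Defensive.

(* Ground set [n] is modelled by 'I_n (elements 0..n-1, same order). *)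

(* Position (1-based) of i within I = #{ j in I | j <= i }. *)
Definition rank_in (n : nat) (I : {set 'I_n}) (i : 'I_n) : nat :=
  #|[set j in I | j <= i]|.

Definition odd_part (n : nat) (I : {set 'I_n}) : {set 'I_n} :=
  [set i in I | odd (rank_in I i)].
Definition even_part (n : nat) (I : {set 'I_n}) : {set 'I_n} :=
  [set i in I | ~~ odd (rank_in I i)].

(* Signed sets are pairs (X^+, X^-). Circuits of the alternating oriented
   matroid C^{n,d}: (I^odd, I^even) and (I^even, I^odd), |I| = d+1. *)
Definition alt_circuit (n d : nat) : pred ({set 'I_n} * {set 'I_n}) := fun X =>
  [exists I : {set 'I_n},
    (#|I| == d.+1) &&
    ((X == (odd_part I, even_part I)) || (X == (even_part I, odd_part I)))].

Definition separated (n : nat) (circ : pred ({set 'I_n} * {set 'I_n}))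
  (I J : {set 'I_n}) : bool :=
  ~~ [exists X : {set 'I_n} * {set 'I_n},
        circ X && (X.1 \subset I :\: J) && (X.2 \subset J :\: I)].

Definition pairwise_separated (n : nat) (circ : pred ({set 'I_n} * {set 'I_n}))
  (S : {set {set 'I_n}}) : bool :=
  [forall I in S, forall J in S, (I != J) ==> separated circ I J].

Definition pure (n : nat) (circ : pred ({set 'I_n} * {set 'I_n})) : Prop :=
  forall S : {set {set 'I_n}},
    maxset (pairwise_separated circ) S ->
    forall T : {set {set 'I_n}}, pairwise_separated circ T -> #|T| <= #|S|.

(* Main.v *)
Require Import Defs.
From mathcomp Require Import all_boot.

Definition S_ (f : nat -> bool) : {set 'I_6} := [set i : 'I_6 | f (nat_of_ord i)].
Definition I6 := iota 0 6.

Lemma card_S f : #|S_ f| = count f I6.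
Proof.
rewrite cardE /enum_mem -enumT size_filter /I6 -val_enum_ord count_map.
by apply: eq_count => i; rewrite /S_ /= inE.
Qed.

Lemma sub_S f g : (S_ f \subset S_ g) = all (fun i => f i ==> g i) I6.
Proof.
apply/subsetP/allP => [h i|h i].
- rewrite /I6 mem_iota add0n => /andP[_ lt]; apply/implyP => fi.
  have := h (Ordinal lt); rewrite !inE /=; exact.
- rewrite !inE => fi; have := h (val i); rewrite /I6 mem_iota ltn_ord.
  by move=> /(_ isT) /implyP; apply.
Qed.

Lemma diff_S f g : S_ f :\: S_ g = S_ (fun i => f i && ~~ g i).
Proof. by apply/setP => i; rewrite !inE andbC. Qed.

Definition rk f i := count (fun j => f j && (j <= i)) I6.

Lemma rank_S f i : rank_in (S_ f) i = rk f (val i).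
Proof.
rewrite /rank_in /rk -(card_S (fun j => f j && (j <= val i))).
apply: eq_card => j; by rewrite !inE.
Qed.

Lemma odd_S f : odd_part (S_ f) = S_ (fun i => f i && odd (rk f i)).
Proof. by apply/setP => i; rewrite !inE rank_S. Qed.

Lemma even_S f : even_part (S_ f) = S_ (fun i => f i && ~~ odd (rk f i)).
Proof. by apply/setP => i; rewrite !inE rank_S. Qed.

Lemma eq_S f g : (S_ f == S_ g) = all (fun i => f i == g i) I6.
Proof.
rewrite eqEsubset !sub_S -all_predI; apply: eq_all => i /=.
by case: (f i); case: (g i).
Qed.

Fixpoint allbs n : seq (seq bool) :=
  if n is n'.+1 then [seq b :: s | b <- [:: true; false], s <- allbs n'] else [:: [::]].

Lemma allbsP bs : bs \in allbs (size bs).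
Proof.
elim: bs => [|b bs IH] //.
change (b :: bs \in [seq b :: s | b <- [:: true; false], s <- allbs (size bs)]).
apply/allpairsP; exists (b, bs) => /=; split => //; by case: b.
Qed.

Lemma set_S (K : {set 'I_6}) : exists2 bs, bs \in allbs 6 & K = S_ (nth false bs).
Proof.
exists [seq i \in K | i <- enum 'I_6].
  by have := allbsP [seq i \in K | i <- enum 'I_6]; rewrite size_map size_enum_ord.
apply/setP => i; rewrite inE (nth_map i) ?size_enum_ord ?ltn_ord //.
by rewrite nth_ord_enum.
Qed.

Definition sepb {n : nat} (d : nat) (I J : {set 'I_n}) : bool :=
  ~~ [exists K : {set 'I_n}, (#|K| == d.+1) &&
      (((odd_part K \subset I :\: J) && (even_part K \subset J :\: I)) ||
       ((even_part K \subset I :\: J) && (odd_part K \subset J :\: I)))].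

Lemma sepE n d I J : separated (@alt_circuit n d) I J = sepb d I J.
Proof.
rewrite /separated /sepb; congr negb.
apply/existsP/existsP.
- case=> X /andP[/andP[/existsP[K /andP[cK hX]] h1] h2].
  exists K; rewrite cK /=.
  by move: h1 h2; case/orP: hX => /eqP -> /= h1 h2; rewrite h1 h2 ?orbT.
- case=> K /andP[cK /orP[/andP[h1 h2]|/andP[h1 h2]]].
  + exists (odd_part K, even_part K); rewrite h1 h2 !andbT.
    by apply/existsP; exists K; rewrite cK eqxx.
  + exists (even_part K, odd_part K); rewrite h1 h2 !andbT.
    by apply/existsP; exists K; rewrite cK eqxx orbT.
Qed.

Definition psepb {n : nat} (d : nat) (S : {set {set 'I_n}}) : bool :=
  [forall I in S, forall J in S, (I != J) ==> sepb d I J].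

Lemma psepE n d S : pairwise_separated (@alt_circuit n d) S = psepb d S.
Proof.
apply: eq_forallb => I; congr (_ ==> _); apply: eq_forallb => J.
by rewrite sepE.
Qed.


Definition ml (l : seq nat) := fun i => i \in l.
Definition oddf (f : nat -> bool) := fun i => f i && odd (rk f i).
Definition evenf (f : nat -> bool) := fun i => f i && ~~ odd (rk f i).
Definition subf (f g : nat -> bool) := all (fun i => f i ==> g i) I6.
Definition dif (f g : nat -> bool) := fun i => f i && ~~ g i.
Definition sepf (f g : nat -> bool) :=
  ~~ has (fun bs => let k := nth false bs in (count k I6 == 5) &&
     ((subf (oddf k) (dif f g) && subf (evenf k) (dif g f)) ||
      (subf (evenf k) (dif f g) && subf (oddf k) (dif g f)))) (allbs 6).

Lemma sepb_S f g : sepb 4 (S_ f) (S_ g) = sepf f g.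
Proof.
rewrite /sepb /sepf; congr negb; apply/existsP/hasP.
- case=> K; have [bs hbs ->] := set_S K.
  rewrite card_S odd_S even_S !diff_S !sub_S => h; by exists bs.
- case=> bs _ h; exists (S_ (nth false bs)).
  by rewrite card_S odd_S even_S !diff_S !sub_S.
Qed.

Definition collOf (L : seq (seq nat)) : {set {set 'I_6}} :=
  [set A | A \in map (fun l => S_ (ml l)) L].

Lemma psep_coll L :
  all (fun l => all (fun l' => ~~ all (fun i => ml l i == ml l' i) I6 ==> sepf (ml l) (ml l')) L) L ->
  psepb 4 (collOf L).
Proof.
move=> h; apply/forallP => I; apply/implyP; rewrite inE => /mapP[l lL ->].
apply/forallP=> J; apply/implyP; rewrite inE => /mapP[l' l'L ->].
rewrite eq_S sepb_S.
by move/allP: h => /(_ l lL)/allP/(_ l' l'L).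
Qed.

Lemma max_coll L :
  all (fun bs => has (fun l => all (fun i => nth false bs i == ml l i) I6) L ||
                 has (fun l => ~~ sepf (nth false bs) (ml l)) L) (allbs 6) ->
  forall A, A \notin collOf L -> exists2 B, B \in collOf L & ~~ sepb 4 A B.
Proof.
move=> h A; have [bs hbs ->] := set_S A.
move/allP: h => /(_ bs hbs)/orP[/hasP[l lL e]|/hasP[l lL ns]].
- rewrite inE => /negP []; apply/mapP; exists l => //; apply/eqP; by rewrite eq_S.
- move=> _; exists (S_ (ml l)); last by rewrite sepb_S.
  by rewrite inE; apply/mapP; exists l.
Qed.

Lemma card_coll L : uniq (map (fun l => map (ml l) I6) L) -> #|collOf L| = size L.
Proof.
move=> u.
have -> : #|collOf L| = #|map (fun l => S_ (ml l)) L|.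
  by apply: eq_card => A; rewrite inE.
have U : uniq (map (fun l => S_ (ml l)) L).
  apply: (map_uniq (f := fun A : {set 'I_6} => [seq (inord i : 'I_6) \in A | i <- I6])).
  rewrite -map_comp; congr uniq: u; apply: eq_map => l.
  rewrite /comp; apply/esym; apply/eq_in_map => i; rewrite /I6 mem_iota add0n => /andP[_ lt].
  by rewrite inE inordK.
by rewrite (card_uniqP U) size_map.
Qed.

Lemma maxset_crit d (S : {set {set 'I_6}}) :
  psepb d S ->
  (forall A, A \notin S -> exists2 B, B \in S & ~~ sepb d A B) ->
  maxset (pairwise_separated (@alt_circuit 6 d)) S.
Proof.
move=> hS hA; apply/maxsetP; split; first by rewrite psepE.
move=> B; rewrite psepE => hB sSB; apply/eqP; rewrite eq_sym eqEsubset sSB /=.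
apply/subsetP => A AB; apply/negPn/negP => AS.
have [C CS nsep] := hA A AS.
have CB : C \in B by apply: (subsetP sSB).
have AC : A != C by apply/eqP => e; rewrite e CS in AS.
move/forallP: hB => /(_ A); rewrite AB /= => /forallP /(_ C).
by rewrite CB AC /= (negbTE nsep).
Qed.

Definition Sl := [:: [:: 0; 1; 5]; [:: 1; 4]; [:: 0; 1; 2; 5]; [:: 1]; [:: 3; 4; 5]; [:: 4; 5]; [:: 0; 1]; [:: 1; 3; 4; 5]; [:: 0; 5]; [:: 0; 2; 4; 5]; [:: 2; 3; 5]; [:: 0; 1; 2; 3]; [:: 0; 3; 4]; [:: 0; 1; 2; 4]; [:: 2]; [:: 0; 1; 3; 5]; [:: 3; 4]; [:: 0; 2; 3]; [:: 0; 4]; [:: 2; 3; 4]; [:: 1; 2]; [:: 0; 2; 3; 4]; [:: 0; 2; 3; 4; 5]; [:: 2; 3]; [:: 0; 1; 3]; [:: 0; 1; 3; 4]; [:: 0]; [:: 0; 1; 2]; [:: 1; 2; 3; 5]; [:: 2; 4; 5]; [:: 0; 1; 2; 3; 4]; [:: 0; 3; 4; 5]; [:: 0; 1; 4; 5]; [:: 0; 1; 2; 3; 4; 5]; [:: 1; 5]; [:: 0; 1; 3; 4; 5]; [:: 0; 1; 2; 3; 5]; [:: 1; 2; 3; 4]; [:: 3]; [:: 1; 2; 4; 5]; [:: 2; 5]; [:: 5]; [:: 0; 1; 2; 4; 5]; [:: 0; 1; 4]; [:: 1; 2; 3]; [::]; [:: 3; 5]; [:: 1; 2; 3; 4; 5];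 [:: 4]; [:: 2; 3; 4; 5]; [:: 1; 4; 5]; [:: 0; 3]; [:: 0; 2]; [:: 0; 4; 5]; [:: 1; 2; 5]].

Definition Tl := [:: [:: 1; 3; 4]; [:: 4; 5]; [:: 2; 3; 4; 5]; [:: 1]; [:: 1; 2; 3; 4; 5]; [:: 0; 1; 3; 4]; [:: 0; 1; 2; 3; 5]; [:: 0; 1; 2; 4]; [:: 2; 3]; [:: 0; 3; 5]; [:: 0; 1; 2; 3; 4]; [:: 0; 1; 4]; [:: 0]; [:: 1; 3; 5]; [:: 0; 3]; [:: 1; 2]; [:: 1; 4; 5]; [:: 2; 3; 5]; [:: 1; 5]; [:: 2]; [:: 0; 2; 3; 4]; [::]; [:: 0; 1; 5]; [:: 3; 4; 5]; [:: 0; 1; 2; 5]; [:: 0; 1; 2; 3]; [:: 0; 1; 2; 3; 4; 5]; [:: 0; 2; 3]; [:: 3]; [:: 1; 3]; [:: 2; 5]; [:: 0; 1; 3; 4; 5]; [:: 0; 1; 4; 5]; [:: 0; 5]; [:: 1; 3; 4; 5]; [:: 3; 4]; [:: 1; 2; 5]; [:: 2; 3; 4]; [:: 5]; [:: 1; 2; 4; 5]; [:: 0; 1; 2; 4; 5]; [:: 0; 3; 4]; [:: 2; 4; 5]; [:: 0; 1; 3; 5]; [:: 1; 2; 3]; [:: 0; 3; 4; 5]; [:: 1; 2; 3; 5]; [:: 0; 1; 3]; [:: 1; 2; 3; 4]; [:: 0; 4]; [:: 0; 1; 2]; [:: 0; 2; 3; 4; 5]; [:: 0; 1]; [:: 0;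 4; 5]; [:: 4]; [:: 0; 2]; [:: 3; 5]].


Lemma S_psep : psepb 4 (collOf Sl). Proof. apply: psep_coll; by vm_compute. Qed.
Lemma S_max A : A \notin collOf Sl -> exists2 B, B \in collOf Sl & ~~ sepb 4 A B.
Proof. apply: max_coll; by vm_compute. Qed.
Lemma T_psep : psepb 4 (collOf Tl). Proof. apply: psep_coll; by vm_compute. Qed.
Lemma card_cmp : #|collOf Tl| <= #|collOf Sl| = false.
Proof. rewrite !card_coll //; by vm_compute. Qed.

Lemma T_ps : pairwise_separated (@alt_circuit 6 4) (collOf Tl).
Proof. by rewrite psepE; exact: T_psep. Qed.

Theorem lemma11p2 : ~ @pure 6 (@alt_circuit 6 4).
Proof.
move=> H.
have := H _ (@maxset_crit 4 _ S_psep S_max) _ T_ps.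
by rewrite card_cmp.
Qed.
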